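(* Let $d_H$ be an $H$-metric on $\chi$ with parameter $\gamma$. Then GD-$k$ with rate $r=\frac{1}{\gamma k^2}$ is $(4mk+k^2)\gamma$-competitive for $k$-MPMD on $(\chi,d_H)$: for every instance $\sigma$ with $m$ requests (and for every way of making the arbitrary choices in the algorithm), the total cost of the perfect $k$-way matching output by GD-$k$ is at most $(4mk+k^2)\gamma\cdot\mathcal{OPT}(\sigma)$.
   Context: $k\ge2$. An $H$-metric with parameter $\gamma$ (integer, $1\le\gamma\le k-1$) is a map $d_H:\chi^k\to[0,\infty)$ that is invariant under permutation of its arguments, is zero iff all arguments are equal, satisfies $d_H(p_1,\ldots,p_k)\le d_H(p_1,\ldots,p_i,a,\ldots,a)+d_H(a,\ldots,a,p_{i+1},\ldots,p_k)$ for all $p_j,a\in\chi$ and $i\in\{1,\dots,k\}$ (with $k-i$, resp. $i$, copies of $a$), and satisfies: $d_H(p)\le d_H(p')$ whenever the set of distinct entries of $p$ is a proper subset of that of $p'$, and $d_H(p)\le\gamma d_H(p')$ whenever these sets are equal. $k$-MPMD: an instance is $\sigma=(V,\mathrm{atime},\mathrm{pos})$ with $V=\{u_1,\ldots,u_m\}$ ($m$ a multiple of $k$), nondecreasing arrival times $\mathrm{atime}:V\to\mathbb R_{\ge0}$ and positions $\mathrm{pos}:V\to\chi$; requests arrive over time and an online algorithm must partition $V$ into $k$-element groups (a perfect $k$-way matching), forming a group $\{v_1,\ldots,v_k\}$ of arrived, unmatched requests at some time $\tau$ at cost $d_H(\mathrm{pos}(v_1),\ldots,\mathrm{pos}(v_k))+\sum_{i=1}^k(\tau-\mathrm{atime}(v_i))$.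 $\mathcal{OPT}(\sigma)$ is the minimum, over all perfect $k$-way matchings $\mathcal M$ of $V$, of $\sum_{F\in\mathcal M}\big(d_H(\mathrm{pos}(F))+\sum_{v\in F}(\max_{u\in F}\mathrm{atime}(u)-\mathrm{atime}(v))\big)$. The metric $d$ on $\chi$ is $d(p,q):=d_H(p,q,\ldots,q)+d_H(q,p,\ldots,p)$ (first argument once, second $k-1$ times); for distinct requests, $\mathrm{opt\text{-}cost}(\{u,w\}):=d(\mathrm{pos}(u),\mathrm{pos}(w))+|\mathrm{atime}(u)-\mathrm{atime}(w)|$; $\delta(S)$ is the set of pairs of distinct requests with exactly one element in $S$. Algorithm GD-$k$ (Greedy Dual for $k$-MPMD) runs in continuous time from $0$. It maintains: a partition of the already-arrived requests into ''active sets'' ($A(v)$ denotes the active set containing $v$); a family $\mathcal M$ of disjoint $k$-element sets of requests (the groups matched so far); a request is free if it lies in no set of $\mathcal M$, and $\mathrm{free}(S)$ is the set of free requests of $S$; and dual values $y_S(\tau)\ge0$ for $S\subseteq V$, all initially $0$. When a request $v$ arrives, $A(v):=\{v\}$ is created. At every moment, for each active set $S$ with $\mathrm{free}(S)\ne\emptyset$, $y_S$ increases continuously at rate $r$; all other $y_S$ stay constant. Whenever a pair $e=\{u,w\}$ of arrived requests with $A(u)\ne A(w)$ becomes tight, i.e. $\sum_{S:e\in\delta(S)}y_S=\frac{1}{\gamma k^2}\mathrm{opt\text{-}cost}(e)$, the algorithm replaces $A(u)$ and $A(w)$ by the single active set $S=A(u)\cup A(w)$, marks $e$, and, while $|\mathrm{free}(S)|\ge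 k$, chooses arbitrarily $k$ free requests of $S$ and adds them as a group to $\mathcal M$ (they are matched at the current time). *)

(* Defs.v *)
From HB Require Import structures.
From mathcomp Require Import all_boot all_order all_algebra all_fingroup.
From mathcomp Require Import reals.
Set Implicit Arguments. Unset Strict Implicit. Unset Printing Implicit Defensive.
Import Order.TTheory GRing.Theory Num.Theory.
Local Open Scope ring_scope.

Definition range_sub (X : Type) (k : nat) (p p' : 'I_k -> X) : Prop :=
  forall i, exists j, p i = p' j.

Definition H_metric (R : realType) (X : Type) (k gamma : nat)
    (dH : ('I_k -> X) -> R) : Prop :=
  [/\ (forall (p : 'I_k -> X) (s : {perm 'I_k}), dH (fun i => p (s i)) = dH p),
      (forall p, 0 <= dH p),
      (forall p, dH p = 0 <-> (forall i j, p i = p j)),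
      (forall (p : 'I_k -> X) (a : X) (i : nat), (1 <= i <= k)%N ->
          dH p <= dH (fun j => if (val j < i)%N then p j else a)
                + dH (fun j => if (val j < i)%N then a else p j)) &
      (forall p p', range_sub p p' /\ ~ range_sub p' p -> dH p <= dH p') /\
      (forall p p', range_sub p p' /\ range_sub p' p -> dH p <= gamma%:R * dH p')].

Record gstate (R : realType) (m k : nat) := GState {
  gs_t : R;
  gs_A : {set {set 'I_m}};
  gs_M : seq ({ffun 'I_k -> 'I_m} * R);       (* matched groups with matching time *)
  gs_y : {set 'I_m} -> R
}.

Section GD.
Variables (R : realType) (X : Type) (k m gamma : nat).
Variables (dH : ('I_k -> X) -> R) (atime : 'I_m -> R) (pos : 'I_m -> X).

Definition dmet (p q : X) : R :=
  dH (fun j => if val j == 0%N then p else q)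
  + dH (fun j => if val j == 0%N then q else p).

Definition opt_cost_pair (u w : 'I_m) : R :=
  dmet (pos u) (pos w) + `|atime u - atime w|.

Definition tight_bound (u w : 'I_m) : R :=
  opt_cost_pair u w / (gamma%:R * (k ^ 2)%:R).

Definition load (y : {set 'I_m} -> R) (u w : 'I_m) : R :=
  \sum_(S : {set 'I_m} | (u \in S) != (w \in S)) y S.

Definition grp (g : {ffun 'I_k -> 'I_m}) : {set 'I_m} := [set g i | i : 'I_k].

Definition matched (M : seq ({ffun 'I_k -> 'I_m} * R)) : {set 'I_m} :=
  \bigcup_(g <- M) grp g.1.

Definition freeS (M : seq ({ffun 'I_k -> 'I_m} * R)) (S : {set 'I_m}) :=
  S :\: matched M.

Variable r : R.

Definition grow (A : {set {set 'I_m}}) (M : seq ({ffun 'I_k -> 'I_m} * R))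
    (y : {set 'I_m} -> R) (D : R) : {set 'I_m} -> R :=
  fun S => if (S \in A) && (freeS M S != set0) then y S + r * D else y S.

Inductive gd_step : gstate R m k -> gstate R m k -> Prop :=
(* arrival of request v at its arrival time (requests arrive in index order) *)
| step_arrive t A M y (v : 'I_m) :
    v \notin cover A -> atime v = t ->
    (forall u : 'I_m, (val u < val v)%N -> u \in cover A) ->
    gd_step (GState t A M y) (GState t ([set v] |: A) M y)
(* time advances by D > 0; no arrival is skipped, no pair is currently
   tight, and no pair exceeds tightness during the advance *)
| step_advance t A M y (D : R) :
    0 < D ->
    (forall v, atime v < t + D -> v \in cover A) ->
    (forall u w, u \in cover A -> w \in cover A -> pblock A u != pblock A w ->
        load y u w < tight_bound u w /\
        load (grow A M y D) u w <= tight_bound u w) ->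
    gd_step (GState t A M y) (GState (t + D) A M (grow A M y D))
(* a tight pair {u,w} between different active sets: merge, then greedily
   match groups of k free requests of the merged set while >= k are free *)
| step_merge t A M y (u w : 'I_m) (gs : seq {ffun 'I_k -> 'I_m}) :
    u \in cover A -> w \in cover A -> pblock A u != pblock A w ->
    load y u w = tight_bound u w ->
    (forall g, g \in gs ->
       injectiveb g && (grp g \subset freeS M (pblock A u :|: pblock A w))) ->
    pairwise (fun g h => [disjoint grp g & grp h]) gs ->
    (#|freeS M (pblock A u :|: pblock A w) :\: \bigcup_(g <- gs) grp g| < k)%N ->
    gd_step (GState t A M y)
      (GState t ((pblock A u :|: pblock A w) |: ((A :\ pblock A u) :\ pblock A w))
              (M ++ [seq (g, t) | g <- gs]) y).

Definition gd_init : gstate R m k := GState 0 set0 [::] (fun _ => 0).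

Inductive gd_reachable : gstate R m k -> Prop :=
| reach_init : gd_reachable gd_init
| reach_step c c' : gd_reachable c -> gd_step c c' -> gd_reachable c'.

Definition gd_complete (c : gstate R m k) : Prop := matched (gs_M c) = setT.

Definition alg_cost (M : seq ({ffun 'I_k -> 'I_m} * R)) : R :=
  \sum_(g <- M) (dH (fun i => pos (g.1 i)) + \sum_(i < k) (g.2 - atime (g.1 i))).

Definition perfect_kmatching (P : {set {ffun 'I_k -> 'I_m}}) : Prop :=
  [/\ forall F, F \in P -> injective F,
      forall F G, F \in P -> G \in P -> F != G -> [disjoint grp F & grp G] &
      forall v, exists2 F, F \in P & v \in grp F].

Definition group_opt_cost (F : {ffun 'I_k -> 'I_m}) : R :=
  dH (fun i => pos (F i))
  + \sum_(i < k) (\big[Num.max/0]_(j < k) atime (F j) - atime (F i)).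

Definition matching_cost (P : {set {ffun 'I_k -> 'I_m}}) : R :=
  \sum_(F in P) group_opt_cost F.

End GD.

(* Main.v *)
Require Import Defs.
From HB Require Import structures.
From mathcomp Require Import all_boot all_order all_algebra all_fingroup.
From mathcomp Require Import reals.
From mathcomp Require Import ring lra.
From Stdlib Require Import FunctionalExtensionality Classical.
Set Implicit Arguments. Unset Strict Implicit. Unset Printing Implicit Defensive.
Import Order.TTheory GRing.Theory Num.Theory.
Local Open Scope ring_scope.

Section HM.
Variables (R : realType) (X : Type) (k gamma : nat) (dH : ('I_k -> X) -> R).
Hypothesis hk : (2 <= k)%N.
Hypothesis hg : (1 <= gamma)%N.
Hypothesis hH : H_metric gamma dH.

Definition hh (p q : X) := dH (fun j : 'I_k => if val j == 0%N then p else q).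

Lemma dH_ext p q : (forall i, p i = q i) -> dH p = dH q.
Proof. by move=> e; congr dH; apply: functional_extensionality. Qed.

Lemma dH_ge0 p : 0 <= dH p.
Proof. by case: hH. Qed.

Lemma dH_const p : (forall i j, p i = p j) -> dH p = 0.
Proof. by case: hH => _ _ h _ _; move=> H; apply/h. Qed.

Lemma hh_ge0 p q : 0 <= hh p q.
Proof. exact: dH_ge0. Qed.

Lemma hh_tri p x q : hh p q <= hh p x + hh x q.
Proof.
case: hH => _ _ _ h _.
have := h (fun j : 'I_k => if val j == 0%N then p else q) x 1%N.
rewrite (leq_trans _ hk) //= => /(_ isT).
rewrite /hh.
rewrite (@dH_ext (fun j : 'I_k => if (val j < 1)%N then _ else x)
   (fun j : 'I_k => if val j == 0%N then p else x)); last by case=> [[|j] ?].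
by rewrite (@dH_ext (fun j : 'I_k => if (val j < 1)%N then x else _)
   (fun j : 'I_k => if val j == 0%N then x else q)); last by case=> [[|j] ?].
Qed.

Lemma dmetE p q : dmet dH p q = hh p q + hh q p.
Proof. by []. Qed.

Lemma dmet_ge0 p q : 0 <= dmet dH p q.
Proof. by rewrite dmetE addr_ge0 // hh_ge0. Qed.

Lemma dmet_sym p q : dmet dH p q = dmet dH q p.
Proof. by rewrite !dmetE addrC. Qed.

Lemma dmet_refl p : dmet dH p p = 0.
Proof. by rewrite dmetE /hh !dH_const ?addr0 // => i j; case: ifP; case: ifP. Qed.

Lemma dmet_tri p x q : dmet dH p q <= dmet dH p x + dmet dH x q.
Proof.
rewrite !dmetE; have := hh_tri p x q; have := hh_tri q x p; lra.
Qed.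

Let i0 : 'I_k := Ordinal (leq_trans (isT : (0 < 2)%N) hk).

Lemma dH_single (e : 'I_k) x a :
  dH (fun j => if j == e then x else a) <= dmet dH x a.
Proof.
case: hH => hperm _ _ _ _.
rewrite -(hperm _ (tperm i0 e)).
rewrite (@dH_ext _ (fun j : 'I_k => if val j == 0%N then x else a)).
  by rewrite dmetE lerDl hh_ge0.
move=> j; have -> : (tperm i0 e j == e) = (j == i0).
  apply/eqP/eqP => [h|->]; last exact: tpermL.
  by apply: (@perm_inj _ (tperm i0 e)); rewrite h tpermL.
by [].
Qed.

Lemma pref_step (p : 'I_k -> X) a n (hnk : (n < k)%N) :
  dH (fun j : 'I_k => if (val j < n.+1)%N then p j else a)
     <= dH (fun j : 'I_k => if (val j < n)%N then p j else a)
        + dH (fun j => if j == Ordinal hnk then p (Ordinal hnk) else a).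
Proof.
case: n hnk => [|n] hnk.
  rewrite (@dH_const (fun j : 'I_k => if (val j < 0)%N then p j else a)) ?add0r; last by [].
  rewrite le_eqVlt; apply/orP; left; apply/eqP; apply: dH_ext.
  by case=> [[|j] ?] //=; congr p; apply: val_inj.
case: hH => _ _ _ htri _.
have := htri (fun j : 'I_k => if (val j < n.+2)%N then p j else a) a n.+1.
rewrite (ltnW hnk) /= => /(_ isT).
rewrite (@dH_ext (fun j : 'I_k => if (val j < n.+1)%N then _ else a)
  (fun j : 'I_k => if (val j < n.+1)%N then p j else a)); last first.
  by move=> j; case: ifP => // h; rewrite ltnS (ltnW h).
rewrite (@dH_ext (fun j : 'I_k => if (val j < n.+1)%N then a else _)
  (fun j => if j == Ordinal hnk then p (Ordinal hnk) else a)) //.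
move=> j; rewrite -val_eqE /=; case: ltngtP => h //=.
- by rewrite ltnNge h.
- by rewrite h ltnSn; congr p; apply: val_inj.
Qed.

Lemma dH_decomp (p : 'I_k -> X) a : dH p <= \sum_(i < k) dmet dH (p i) a.
Proof.
have pref : forall n, (n <= k)%N ->
  dH (fun j : 'I_k => if (val j < n)%N then p j else a)
   <= \sum_(i < k | (val i < n)%N) dmet dH (p i) a.
  elim=> [|n IH] hn.
    by rewrite dH_const ?sumr_ge0 // => *; exact: dmet_ge0.
  have hnk : (n < k)%N by [].
  rewrite (bigD1 (Ordinal hnk)) //=.
  rewrite (eq_bigl (fun i : 'I_k => (val i < n)%N)); last first.
    move=> i; rewrite ltnS leq_eqVlt -val_eqE /=.
    by case: (ltngtP (val i) n).
  apply: (le_trans (pref_step p a hnk)); rewrite addrC lerD // ?dH_single // IH //.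
  exact: ltnW.
have := pref k (leqnn k).
rewrite (@dH_ext _ p) => [|j]; last by rewrite ltn_ord.
by rewrite (eq_bigl xpredT) // => i; rewrite ltn_ord.
Qed.

Lemma hh_group (F : 'I_k -> X) i j : hh (F i) (F j) <= gamma%:R * dH F.
Proof.
case: hH => _ _ _ _ [h1 h2].
have hs : range_sub (fun l : 'I_k => if val l == 0%N then F i else F j) F.
  by move=> l; case: ifP => _; [exists i | exists j].
have g1 : 1 <= gamma%:R :> R by rewrite ler1n.
have := dH_ge0 F => d0.
case: (classic (range_sub F (fun l : 'I_k => if val l == 0%N then F i else F j))).
  by move=> hs'; apply: h2.
move=> hs'; have := h1 _ _ (conj hs hs'); rewrite /hh => hle.
apply: (le_trans hle); nra.
Qed.

Lemma dmet_group (F : 'I_k -> X) i j : dmet dH (F i) (F j) <= 2 * gamma%:R * dH F.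
Proof. rewrite dmetE; have := hh_group F i j; have := hh_group F j i; lra. Qed.

End HM.



Section SetLemmas.
Variable T : finType.
Lemma coverU1 (B : {set T}) (A : {set {set T}}) : cover (B |: A) = B :|: cover A.
Proof.
apply/setP => x; rewrite inE; apply/bigcupP/orP.
  by case=> C /setU1P [->|hC] hx; [left | right; apply/bigcupP; exists C].
case=> [hx|/bigcupP [C hC hx]]; first by exists B; rewrite ?setU11.
by exists C; rewrite // setU1r.
Qed.

Lemma in_coverP (A : {set {set T}}) x : reflect (exists2 B, B \in A & x \in B) (x \in cover A).
Proof. exact: bigcupP. Qed.

Lemma cover0' : cover (set0 : {set {set T}}) = set0.
Proof. by apply/setP => x; rewrite inE; apply/in_coverP; case=> B; rewrite inE. Qed.

Lemma pblock_eq (A : {set {set T}}) B x : trivIset A -> B \in A -> x \in B -> pblock A x = B.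
Proof. exact: def_pblock. Qed.

Lemma cardsU_disj (A B : {set T}) : [disjoint A & B] -> #|A :|: B| = (#|A| + #|B|)%N.
Proof. by move=> h; rewrite cardsU (disjoint_setI0 h) cards0 subn0. Qed.

Lemma sub_disj0 (S1 S2 U : {set T}) : [disjoint S1 & S2] -> U \subset S1 -> U \subset S2 -> U = set0.
Proof.
move=> hd h1 h2; apply/setP => x; rewrite inE; apply/negP => hx.
by have := disjointFr hd (subsetP h1 _ hx); rewrite (subsetP h2 _ hx).
Qed.
End SetLemmas.

Section Main.
Variables (R : realType) (X : Type) (k m gamma : nat) (dH : ('I_k -> X) -> R)
  (atime : 'I_m -> R) (pos : 'I_m -> X).
Hypothesis hk : (2 <= k)%N.
Hypothesis hg : (1 <= gamma)%N.
Hypothesis hH : H_metric gamma dH.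
Hypothesis hat0 : forall v, 0 <= atime v.

Definition KK : R := gamma%:R * (k ^ 2)%:R.
Local Notation K := KK.
Local Notation r := (KK^-1).
Local Notation tight := (tight_bound gamma dH atime pos).
Local Notation mset := {set 'I_m}.
Local Notation gseq := (seq ({ffun 'I_k -> 'I_m} * R)).

Definition Wy (y : mset -> R) u := \sum_(T : mset | u \in T) y T.
Definition Sig (y : mset -> R) (S : mset) u w :=
  \sum_(T : mset | (T \subset S) && (u \notin T) && (w \notin T)) y T.
Definition Ysum (y : mset -> R) := \sum_(T : mset) y T.

Record Inv (t : R) (A : {set mset}) (M : gseq) (y : mset -> R) : Prop := {
  i_triv : trivIset A;
  i_n0 : set0 \notin A;
  i_y0 : forall T, 0 <= y T;
  i_ysub : forall T, y T != 0 -> exists2 B, B \in A & T \subset B;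
  i_ydiv : forall T, y T != 0 -> ~~ (k %| #|T|)%N;
  i_blk : forall B, B \in A -> (k %| #|B :&: matched (R:=R) M|)%N && (#|freeS (R:=R) M B| < k)%N;
  i_mcov : matched (R:=R) M \subset cover A;
  i_msz : (k * size M)%N = #|matched (R:=R) M|;
  i_time : forall u, u \in cover A -> Wy y u <= r * (t - atime u);
  i_free : forall u, u \in cover A -> u \notin matched (R:=R) M -> Wy y u = r * (t - atime u);
  i_feas : forall u w, u \in cover A -> w \in cover A -> load y u w <= tight u w;
  i_dist : forall u w, u \in cover A -> w \in cover A -> pblock A w = pblock A u ->
     dmet dH (pos u) (pos w) <= K * (load y u w + 2 * Sig y (pblock A u) u w);
  i_alg : alg_cost dH atime pos M <= (size M)%:R * (2 * k%:R * K) * Ysum y }.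

Lemma K_gt0 : 0 < K.
Proof. by rewrite /KK mulr_gt0 // ltr0n ?expn_gt0 //; case: k hk. Qed.

Lemma r_ge0 : 0 <= r.
Proof. by rewrite invr_ge0 ltW // K_gt0. Qed.

Lemma loadE (y : mset -> R) u w : load y u w = \sum_(T : mset) (if (u \in T) != (w \in T) then y T else 0).
Proof. by rewrite /load big_mkcond. Qed.

Lemma SigE (y : mset -> R) S u w : Sig y S u w =
  \sum_(T : mset) (if (T \subset S) && (u \notin T) && (w \notin T) then y T else 0).
Proof. by rewrite /Sig big_mkcond. Qed.

Lemma WyE (y : mset -> R) u : Wy y u = \sum_(T : mset) (if u \in T then y T else 0).
Proof. by rewrite /Wy big_mkcond. Qed.

Lemma loadC (y : mset -> R) u w : load y u w = load y w u.
Proof. by apply: eq_bigl => T; rewrite eq_sym. Qed.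

Lemma SigC (y : mset -> R) S u w : Sig y S u w = Sig y S w u.
Proof. by apply: eq_bigl => T; rewrite -andbA (andbC (u \notin T)) andbA. Qed.

Lemma tightC u w : tight u w = tight w u.
Proof. by rewrite /tight_bound /opt_cost_pair dmet_sym distrC. Qed.

Lemma tight_ge0 u w : 0 <= tight u w.
Proof.
rewrite /tight_bound /opt_cost_pair divr_ge0 //; last by rewrite ltW // K_gt0.
by rewrite addr_ge0 // (dmet_ge0 hH).
Qed.

Lemma sum_ge0' (y : mset -> R) (P : pred mset) : (forall T, 0 <= y T) ->
  0 <= \sum_(T | P T) y T.
Proof. by move=> h; rewrite sumr_ge0. Qed.

Lemma Inv_init : Inv 0 set0 [::] (fun _ => 0).
Proof.
have m0 : matched ([::] : gseq) = set0 by rewrite /matched big_nil.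
split=> //.
- by rewrite /trivIset big_pred0 ?cover0' ?cards0 // => B; rewrite inE.
- by rewrite inE.
- by move=> T; rewrite eqxx.
- by move=> T; rewrite eqxx.
- by move=> B; rewrite inE.
- by rewrite m0 sub0set.
- by rewrite m0 cards0 muln0.
- by move=> u; rewrite cover0' inE.
- by move=> u; rewrite cover0' inE.
- by move=> u w; rewrite cover0' inE.
- by move=> u w; rewrite cover0' inE.
- by rewrite /alg_cost big_nil /= mul0r mul0r.
Qed.


Lemma load_ge0 (y : mset -> R) u w : (forall T, 0 <= y T) -> 0 <= load y u w.
Proof. by move=> h; rewrite /load sumr_ge0. Qed.

Lemma Sig_ge0 (y : mset -> R) S u w : (forall T, 0 <= y T) -> 0 <= Sig y S u w.
Proof. by move=> h; rewrite /Sig sumr_ge0. Qed.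

Lemma load_refl (y : mset -> R) u : load y u u = 0.
Proof. by rewrite loadE big1 // => T _; rewrite eqxx. Qed.

Lemma rhs_ge0 (y : mset -> R) S u w : (forall T, 0 <= y T) ->
  0 <= K * (load y u w + 2 * Sig y S u w).
Proof.
move=> h; apply: mulr_ge0; first exact: ltW K_gt0.
apply: addr_ge0; first exact: load_ge0.
by apply: mulr_ge0 => //; exact: Sig_ge0.
Qed.

Lemma tight_time u w : r * (atime u - atime w) <= tight u w.
Proof.
rewrite /tight_bound /opt_cost_pair /KK mulrC; apply: ler_wpM2r.
  by rewrite invr_ge0 mulr_ge0.
have := dmet_ge0 hH (pos u) (pos w); have := ler_norm (atime u - atime w); lra.
Qed.

Lemma Inv_arrive t A M y v : Inv t A M y -> v \notin cover A -> atime v = t ->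
  Inv t ([set v] |: A) M y.
Proof.
case=> htriv hn0 hy0 hysub hydiv hblk hmcov hmsz htime hfree hfeas hdist halg hv hat.
have hvB : forall B, B \in A -> v \notin B.
  by move=> B hB; apply: contra hv => hvB; apply/in_coverP; exists B.
have [htriv' hvA] : trivIset ([set v] |: A) /\ [set v] \notin A.
  apply: trivIsetU1 => // B hB; rewrite disjoints1; exact: hvB.
have cov : cover ([set v] |: A) = [set v] :|: cover A by rewrite coverU1.
have Wv : Wy y v = 0.
  apply: big1 => T hT; apply/eqP; apply: contraT => hne.
  case: (hysub T hne) => B hB hTB.
  by move: (hvB B hB); rewrite (subsetP hTB _ hT).
have loadv : forall w, load y v w = Wy y w.
  move=> w; rewrite loadE WyE; apply: eq_bigr => T _.
  case: (eqVneq (y T) 0) => [->|hne]; first by rewrite !if_same.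
  case: (hysub T hne) => B hB hTB.
  have -> : (v \in T) = false.
    by apply/negP => hvT; move: (hvB B hB); rewrite (subsetP hTB _ hvT).
  by case: (w \in T).
have pb : forall u, u \in cover A -> pblock ([set v] |: A) u = pblock A u.
  move=> u hu; apply: def_pblock => //; first by rewrite setU1r // pblock_mem.
  by rewrite mem_pblock.
have pbv : pblock ([set v] |: A) v = [set v].
  by apply: def_pblock => //; rewrite ?setU11 ?set11.
have mv : v \notin matched (R:=R) M.
  by apply: contra hv => h; apply: (subsetP hmcov).
have feasv : forall w, w \in cover A -> load y v w <= tight v w.
  move=> w hw; rewrite loadv; apply: (le_trans (htime w hw)).
  by rewrite -hat tight_time.
split=> //.
- rewrite in_setU1 negb_or hn0 andbT; apply/negP => /eqP/setP/(_ v).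
  by rewrite !inE eqxx.
- by move=> T /hysub [B hB hTB]; exists B; rewrite ?setU1r.
- move=> B /setU1P [->|hB]; last exact: hblk.
  apply/andP; split.
    suff -> : [set v] :&: matched (R:=R) M = set0 by rewrite cards0 dvdn0.
    apply/setP => x; rewrite !inE; apply/negP => /andP [/eqP -> hm].
    by rewrite hm in mv.
  suff -> : freeS (R:=R) M [set v] = [set v] by rewrite cards1.
  apply/setP => x; rewrite !inE; apply/andb_idl => /eqP ->; exact: mv.
- by rewrite cov; apply: (subset_trans hmcov); rewrite subsetUr.
- move=> u; rewrite cov in_setU1 => /orP [/eqP ->|hu]; last exact: htime.
  by rewrite Wv hat subrr mulr0.
- move=> u; rewrite cov in_setU1 => /orP [/eqP ->|hu]; last exact: hfree.
  by rewrite Wv hat subrr mulr0.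
- move=> u w; rewrite cov !in_setU1 => /orP [/eqP ->|hu] /orP [/eqP ->|hw].
  + by rewrite load_refl tight_ge0.
  + exact: feasv.
  + by rewrite loadC tightC; apply: feasv.
  + exact: hfeas.
- move=> u w; rewrite cov !in_setU1 => /orP [/eqP ->|hu] /orP [/eqP ->|hw].
  + by rewrite (dmet_refl hH) rhs_ge0.
  + rewrite pbv pb // => hwv; move: hvA; rewrite -hwv pblock_mem //.
  + rewrite pbv pb // => hwv; move: hvA; rewrite hwv pblock_mem //.
  + by rewrite !pb //; apply: hdist.
Qed.


Lemma load_mono (y y' : mset -> R) u w : (forall T, y T <= y' T) -> load y u w <= load y' u w.
Proof. by move=> h; rewrite /load; apply: ler_sum => T _; exact: h. Qed.

Lemma Sig_mono (y y' : mset -> R) S u w : (forall T, y T <= y' T) -> Sig y S u w <= Sig y' S u w.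
Proof. by move=> h; rewrite /Sig; apply: ler_sum => T _; exact: h. Qed.

Lemma card_free_ndvd (M : gseq) (T : mset) :
  (k %| #|T :&: matched (R:=R) M|)%N -> (0 < #|freeS (R:=R) M T| < k)%N -> ~~ (k %| #|T|)%N.
Proof.
move=> ha /andP [hb0 hbk].
rewrite -(cardsID (matched (R:=R) M) T) (dvdn_addr _ ha).
apply/negP => /(dvdn_leq hb0); rewrite leqNgt.
by rewrite /freeS in hbk; rewrite hbk.
Qed.

Lemma Inv_advance t A M y D : Inv t A M y -> 0 < D ->
  (forall u w, u \in cover A -> w \in cover A -> pblock A u != pblock A w ->
     load (grow r A M y D) u w <= tight u w) ->
  Inv (t + D) A M (grow r A M y D).
Proof.
case=> htriv hn0 hy0 hysub hydiv hblk hmcov hmsz htime hfree hfeas hdist halg hD hgr.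
set y' := grow r A M y D.
have rD0 : 0 <= r * D by rewrite mulr_ge0 ?r_ge0 ?ltW.
have gsplit : forall T, y' T = y T + (if (T \in A) && (freeS (R:=R) M T != set0) then r * D else 0).
  by move=> T; rewrite /y' /grow; case: ifP; rewrite ?addr0.
have hyy' : forall T, y T <= y' T.
  by move=> T; rewrite gsplit lerDl; case: ifP.
have hy'0 : forall T, 0 <= y' T by move=> T; apply: le_trans (hyy' T).
have gout : forall T, T \notin A -> y' T = y T.
  by move=> T hT; rewrite gsplit (negbTE hT) addr0.
have Wsplit : forall u, u \in cover A ->
    Wy y' u = Wy y u + (if freeS (R:=R) M (pblock A u) != set0 then r * D else 0).
  move=> u hu; rewrite !WyE.
  rewrite (eq_bigr (fun T : mset => (if u \in T then y T else 0) +
     (if u \in T then (if (T \in A) && (freeS (R:=R) M T != set0) then r * D else 0) else 0)));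
    last by move=> T _; rewrite gsplit; case: ifP; rewrite ?addr0.
  rewrite big_split /=; congr (_ + _).
  rewrite (bigD1 (pblock A u)) //= mem_pblock hu pblock_mem //= big1 ?addr0 //.
  move=> T hT; case: ifP => // huT; case hTA: (T \in A) => //=.
  by move: hT; rewrite (def_pblock htriv hTA huT) eqxx.
split=> //.
- move=> T; rewrite gsplit; case: ifP => [/andP [hTA _] _|_]; first by exists T.
  by rewrite addr0; apply: hysub.
- move=> T; rewrite gsplit; case: ifP => [/andP [hTA hf] _|_]; last by rewrite addr0; apply: hydiv.
  case/andP: (hblk T hTA) => ha hb; apply: (card_free_ndvd ha).
  by rewrite hb card_gt0 hf.
- move=> u hu; rewrite Wsplit // (le_trans (lerD (htime u hu) (_ : _ <= r * D))) //.
    by case: ifP.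
  by rewrite -mulrDr addrAC.
- move=> u hu hm; rewrite Wsplit // hfree //.
  have -> : freeS (R:=R) M (pblock A u) != set0.
    by apply/set0Pn; exists u; rewrite /freeS inE hm mem_pblock.
  by rewrite -mulrDr addrAC.
- move=> u w hu hw; case: (eqVneq (pblock A u) (pblock A w)) => hb; last exact: hgr.
  apply: le_trans (hfeas u w hu hw); rewrite le_eqVlt; apply/orP; left; apply/eqP.
  rewrite !loadE; apply: eq_bigr => T _.
  case hTA: (T \in A); last by rewrite gout ?hTA.
  have -> : (u \in T) = (w \in T).
    apply/idP/idP => h.
      by rewrite -(def_pblock htriv hTA h) hb mem_pblock.
    by rewrite -(def_pblock htriv hTA h) -hb mem_pblock.
  by rewrite eqxx.
- move=> u w hu hw hb; apply: (le_trans (hdist u w hu hw hb)).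
  apply: ler_wpM2l; first exact: ltW K_gt0.
  by rewrite lerD ?load_mono // ler_wpM2l ?Sig_mono.
- apply: (le_trans halg); apply: ler_wpM2l.
    apply: mulr_ge0 => //; apply: mulr_ge0; [exact: mulr_ge0 | exact: ltW K_gt0].
  rewrite /Ysum; apply: ler_sum => T _; exact: hyy'.
Qed.


Lemma Sig_subS (y : mset -> R) (S S' : mset) (u w : 'I_m) : (forall T, 0 <= y T) -> S \subset S' ->
  Sig y S u w <= Sig y S' u w.
Proof.
move=> h hS; rewrite !SigE; apply: ler_sum => T _.
case: ifP => [/andP [/andP [hT ->] ->]|_]; last by case: ifP.
by rewrite (subset_trans hT hS).
Qed.

Lemma cross_comb (y : mset -> R) (S1 S2 : mset) x u0 w0 z :
  (forall T, 0 <= y T) ->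
  (forall T, y T != 0 -> T != set0 /\ [\/ T \subset S1, T \subset S2 | [disjoint T & S1 :|: S2]]) ->
  [disjoint S1 & S2] -> x \in S1 -> u0 \in S1 -> w0 \in S2 -> z \in S2 ->
  load y x u0 + 2 * Sig y S1 x u0 + load y u0 w0 + (load y w0 z + 2 * Sig y S2 w0 z)
   <= load y x z + 2 * Sig y (S1 :|: S2) x z.
Proof.
move=> hy0 hcl hd hx hu hw hz.
rewrite !loadE !SigE !mulr_sumr -!big_split /=; apply: ler_sum => T _.
have hyT := hy0 T.
case: (eqVneq (y T) 0) => [->|hne]; first by rewrite !if_same !mulr0 !addr0.
case: (hcl T hne) => hT0 [] hT.
- have h2 : (T \subset S2) = false.
    by apply/negP => h2; move: hT0; rewrite (sub_disj0 hd hT h2) eqxx.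
  have hw' : (w0 \in T) = false by apply/negP => /(subsetP hT); rewrite (disjointFl hd).
  have hz' : (z \in T) = false by apply/negP => /(subsetP hT); rewrite (disjointFl hd).
  have hS : T \subset S1 :|: S2 by rewrite (subset_trans hT) ?subsetUl.
  rewrite hT h2 hw' hz' hS /=.
  by case: (x \in T); case: (u0 \in T) => /=; lra.
- have h1 : (T \subset S1) = false.
    by apply/negP => h1; move: hT0; rewrite (sub_disj0 hd h1 hT) eqxx.
  have hx' : (x \in T) = false by apply/negP => /(subsetP hT); rewrite (disjointFr hd).
  have hu' : (u0 \in T) = false by apply/negP => /(subsetP hT); rewrite (disjointFr hd).
  have hS : T \subset S1 :|: S2 by rewrite (subset_trans hT) ?subsetUr.
  rewrite hT h1 hx' hu' hS /=.
  by case: (w0 \in T); case: (z \in T) => /=; lra.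
- have hS : forall v, v \in S1 :|: S2 -> (v \in T) = false.
    by move=> v hv; apply: disjointFl hT hv.
  have hsub : forall S' : mset, S' \subset S1 :|: S2 -> (T \subset S') = false.
    move=> S' hS'; apply/negP => hTS; move: hT0.
    by rewrite (sub_disj0 hT (subxx T) (subset_trans hTS hS')) eqxx.
  rewrite !hS ?inE ?hx ?hu ?hw ?hz ?orbT // !hsub ?subsetUl ?subsetUr ?subxx //=.
  lra.
Qed.

Let i0 : 'I_k := Ordinal (leq_trans (isT : (0 < 2)%N) hk).

Lemma group_cost (y : mset -> R) (S : mset) (g : {ffun 'I_k -> 'I_m}) (t : R) :
  (forall T, 0 <= y T) ->
  (forall i, dmet dH (pos (g i)) (pos (g i0)) <=
             K * (load y (g i) (g i0) + 2 * Sig y S (g i) (g i0))) ->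
  (forall i, Wy y (g i) = r * (t - atime (g i))) ->
  dH (fun i => pos (g i)) + \sum_(i < k) (t - atime (g i)) <= 2 * k%:R * K * Ysum y.
Proof.
move=> hy0 hd hw.
have Kr : K * r = 1 by rewrite mulfV // gt_eqF // K_gt0.
have ht : forall i, t - atime (g i) = K * Wy y (g i).
  by move=> i; rewrite hw mulrA Kr mul1r.
apply: le_trans (lerD (dH_decomp hk hH (fun i => pos (g i)) (pos (g i0))) (lexx _)) _.
rewrite -big_split /=.
apply: le_trans (_ : \sum_(i < k) (K * (2 * Ysum y)) <= _); last first.
  by rewrite sumr_const card_ord -mulr_natl le_eqVlt; apply/orP; left; apply/eqP; ring.
apply: ler_sum => i _; rewrite ht; apply: le_trans (lerD (hd i) (lexx _)) _.
rewrite -mulrDr; apply: ler_wpM2l; first exact: ltW K_gt0.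
rewrite loadE SigE WyE /Ysum !mulr_sumr -!big_split /=; apply: ler_sum => T _.
have := hy0 T.
by case: (g i \in T); case: (g i0 \in T); case: (T \subset S) => /=; lra.
Qed.


Lemma sum_seq_le (T : eqType) (s : seq T) (F : T -> R) C :
  (forall x, x \in s -> F x <= C) -> \sum_(x <- s) F x <= (size s)%:R * C.
Proof.
elim: s => [|x s IH] h; first by rewrite big_nil mul0r.
rewrite big_cons /= -add1n natrD mulrDl mul1r; apply: lerD.
  by apply: h; rewrite inE eqxx.
by apply: IH => z hz; apply: h; rewrite inE hz orbT.
Qed.

Lemma card_grp (g : {ffun 'I_k -> 'I_m}) : injectiveb g -> #|grp g| = k.
Proof. by move/injectiveP => hi; rewrite /grp card_imset // card_ord. Qed.

Lemma card_bigcup_seq (gs : seq {ffun 'I_k -> 'I_m}) :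
  (forall g, g \in gs -> injectiveb g) ->
  pairwise (fun g h : {ffun 'I_k -> 'I_m} => [disjoint grp g & grp h]) gs ->
  #|\bigcup_(g <- gs) grp g| = (k * size gs)%N.
Proof.
elim: gs => [|g gs IH] hi; first by rewrite big_nil cards0 muln0.
rewrite pairwise_cons => /andP [hall hp].
rewrite big_cons cardsU_disj ?card_grp ?IH //= ?mulnS //.
- by move=> h hh; apply: hi; rewrite inE hh orbT.
- by apply: hi; rewrite inE eqxx.
rewrite bigcup_seq; apply/bigcup_disjoint => h hh; exact: (allP hall h hh).
Qed.

Lemma Inv_merge t A M y u0 w0 (gs : seq {ffun 'I_k -> 'I_m}) :
  Inv t A M y -> u0 \in cover A -> w0 \in cover A -> pblock A u0 != pblock A w0 ->
  load y u0 w0 = tight u0 w0 ->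
  (forall g, g \in gs -> injectiveb g &&
      (grp g \subset freeS (R:=R) M (pblock A u0 :|: pblock A w0))) ->
  pairwise (fun g h : {ffun 'I_k -> 'I_m} => [disjoint grp g & grp h]) gs ->
  (#|freeS (R:=R) M (pblock A u0 :|: pblock A w0) :\: \bigcup_(g <- gs) grp g| < k)%N ->
  Inv t (pblock A u0 :|: pblock A w0 |: A :\ pblock A u0 :\ pblock A w0)
        (M ++ [seq (g, t) | g <- gs]) y.
Proof.
case=> htriv hn0 hy0 hysub hydiv hblk hmcov hmsz htime hfree hfeas hdist halg.
move=> hu0 hw0 hne htight hgs hpw hfk.
set S1 := pblock A u0; set S2 := pblock A w0; set S := S1 :|: S2.
set U := \bigcup_(g <- gs) grp g.
set P := A :\ S1 :\ S2.
have hS1 : S1 \in A by apply: pblock_mem.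
have hS2 : S2 \in A by apply: pblock_mem.
have hd12 : [disjoint S1 & S2] by apply: (trivIsetP htriv).
have hUfree : U \subset freeS (R:=R) M S.
  rewrite /U bigcup_seq; apply/bigcupsP => g hgg; by case/andP: (hgs g hgg).
have hUS : U \subset S by apply: (subset_trans hUfree); rewrite /freeS subsetDl.
have hUm : [disjoint U & matched (R:=R) M].
  rewrite disjoints_subset; apply: (subset_trans hUfree).
  by apply/subsetP => x; rewrite !inE => /andP [-> _].
have hcardU : #|U| = (k * size gs)%N.
  apply: card_bigcup_seq => // g hgg; by case/andP: (hgs g hgg).
have hPA : forall B, B \in P -> [/\ B \in A, B != S1 & B != S2].
  by move=> B; rewrite !inE => /and3P [? ? ?].
have hPdis : forall B, B \in P -> [disjoint S & B].
  move=> B /hPA [hB n1 n2]; rewrite -setI_eq0 setIUl.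
  rewrite (disjoint_setI0 (trivIsetP htriv _ _ hS1 hB _)) ?(eq_sym S1) //.
  by rewrite (disjoint_setI0 (trivIsetP htriv _ _ hS2 hB _)) ?(eq_sym S2) // setU0.
have [htriv' hSP] : trivIset (S |: P) /\ S \notin P.
  apply: trivIsetU1 => //.
    by apply: (trivIsetS _ htriv); apply/subsetP => B /hPA [].
  by apply: contra hn0 => /hPA [].
have hcov : cover (S |: P) = cover A.
  rewrite coverU1; apply/setP => x; rewrite inE; apply/orP/in_coverP.
    case=> [|/in_coverP [B hB hx]].
      by case/setUP => hx; [exists S1 | exists S2].
    by exists B => //; case: (hPA B hB).
  move=> [B hB hx]; case: (eqVneq B S1) => [e1|n1].
    by left; rewrite inE -e1 hx.
  case: (eqVneq B S2) => [e2|n2]; first by left; rewrite inE -e2 hx orbT.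
  by right; apply/in_coverP; exists B => //; rewrite !inE n1 n2 hB.
have pbS : forall x, x \in S -> pblock (S |: P) x = S.
  by move=> x hx; apply: def_pblock => //; rewrite setU11.
have pbP : forall x B, B \in P -> x \in B -> pblock (S |: P) x = B.
  by move=> x B hB hx; apply: def_pblock => //; rewrite setU1r.
have hmM' : matched (R:=R) (M ++ [seq (g, t) | g <- gs]) = matched (R:=R) M :|: U.
  by rewrite /matched big_cat big_map.
have Scov : S \subset cover A.
  by apply/subsetP => x hx; rewrite -hcov coverU1 inE hx.
have dtight : dmet dH (pos u0) (pos w0) <= K * load y u0 w0.
  rewrite htight /tight_bound /KK mulrCA mulfV ?mulr1; last first.
    by rewrite mulf_neq0 // pnatr_eq0 -lt0n ?expn_gt0 //; case: k hk.
  by rewrite /opt_cost_pair lerDl normr_ge0.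
have hcl : forall T, y T != 0 ->
    T != set0 /\ [\/ T \subset S1, T \subset S2 | [disjoint T & S1 :|: S2]].
  move=> T hT; split.
    by apply: contra (hydiv T hT) => /eqP ->; rewrite cards0 dvdn0.
  case: (hysub T hT) => B hB hTB.
  case: (eqVneq B S1) => [e1|n1]; first by apply: Or31; rewrite -e1.
  case: (eqVneq B S2) => [e2|n2]; first by apply: Or32; rewrite -e2.
  apply: Or33; apply: (disjointWl hTB); rewrite disjoint_sym; apply: hPdis.
  by rewrite !inE n1 n2 hB.
have cross : forall x z, x \in S1 -> z \in S2 ->
    dmet dH (pos x) (pos z) <= K * (load y x z + 2 * Sig y S x z).
  move=> x z hx hz.
  have hxc : x \in cover A by apply: (subsetP Scov); rewrite inE hx.
  have hzc : z \in cover A by apply: (subsetP Scov); rewrite inE hz orbT.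
  have px : pblock A x = S1 by apply: def_pblock.
  have pz : pblock A z = S2 by apply: def_pblock.
  have e1 := hdist x u0 hxc hu0 (esym px).
  have e3 := hdist w0 z hw0 hzc pz.
  rewrite px in e1.
  have hu0S : u0 \in S1 by rewrite mem_pblock.
  have hw0S : w0 \in S2 by rewrite mem_pblock.
  have hc := ler_wpM2l (ltW K_gt0) (cross_comb hy0 hcl hd12 hx hu0S hw0S hz).
  change (Sig y (pblock A w0) w0 z) with (Sig y S2 w0 z) in e3.
  rewrite !mulrDr in e1 e3 hc dtight *.
  have t1 := dmet_tri hk hH (pos x) (pos u0) (pos z).
  have t2 := dmet_tri hk hH (pos u0) (pos w0) (pos z).
  lra.
have hdist' : forall x z, x \in cover (S |: P) -> z \in cover (S |: P) ->
    pblock (S |: P) z = pblock (S |: P) x ->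
    dmet dH (pos x) (pos z) <= K * (load y x z + 2 * Sig y (pblock (S |: P) x) x z).
  move=> x z; rewrite hcov => hx hz.
  have hx' : x \in S :|: cover P by rewrite -coverU1 hcov.
  case/setUP: hx' => [hxS | /in_coverP [B hB hxB]].
    rewrite (pbS x hxS) => hpz.
    have : z \in pblock (S |: P) z by rewrite mem_pblock hcov.
    rewrite hpz => hzS.
    have sub1 : forall S0 : mset, S0 \subset S -> forall v w,
        dmet dH (pos v) (pos w) <= K * (load y v w + 2 * Sig y S0 v w) ->
        dmet dH (pos v) (pos w) <= K * (load y v w + 2 * Sig y S v w).
      move=> S0 hS0 v w h; apply: (le_trans h); apply: ler_wpM2l; first exact: ltW K_gt0.
      by rewrite lerD // ler_wpM2l // Sig_subS.
    case/setUP: hxS => hxi; case/setUP: hzS => hzi.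
    - have px : pblock A x = S1 by apply: def_pblock.
      have pz : pblock A z = S1 by apply: def_pblock.
      apply: (sub1 S1); first by rewrite subsetUl.
      by rewrite -px; apply: hdist => //; rewrite px pz.
    - exact: cross.
    - by rewrite dmet_sym loadC SigC; apply: cross.
    - have px : pblock A x = S2 by apply: def_pblock.
      have pz : pblock A z = S2 by apply: def_pblock.
      apply: (sub1 S2); first by rewrite subsetUr.
      by rewrite -px; apply: hdist => //; rewrite px pz.
  rewrite (pbP x B hB hxB) => hpz.
  have : z \in pblock (S |: P) z by rewrite mem_pblock hcov.
  rewrite hpz => hzB.
  have [hBA _ _] := hPA B hB.
  have px : pblock A x = B by apply: def_pblock.
  have pz : pblock A z = B by apply: def_pblock.
  by rewrite -px; apply: hdist => //; rewrite px pz.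
split.
- exact: htriv'.
- rewrite in_setU1 negb_or; apply/andP; split; last by apply: contra hn0 => /hPA [].
  apply/negP => /eqP/setP/(_ u0); rewrite !inE mem_pblock hu0 //.
- exact: hy0.
- move=> T /hysub [B hB hTB].
  case: (eqVneq B S1) => [e1|n1].
    by exists S; rewrite ?setU11 // (subset_trans hTB) // e1 subsetUl.
  case: (eqVneq B S2) => [e2|n2].
    by exists S; rewrite ?setU11 // (subset_trans hTB) // e2 subsetUr.
  by exists B => //; rewrite setU1r // !inE n1 n2 hB.
- exact: hydiv.
- move=> B /setU1P [->|hB].
    apply/andP; split.
      rewrite hmM' setIUr (setIidPr hUS) cardsU_disj; last first.
        rewrite disjoint_sym; apply: (disjointWr (subsetIr _ _)).
        exact: hUm.
      rewrite setIUl cardsU_disj; last first.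
        by apply: (disjointWl (subsetIl _ _)); apply: (disjointWr (subsetIl _ _)).
      case/andP: (hblk S1 hS1) => d1 _; case/andP: (hblk S2 hS2) => d2 _.
      by rewrite !dvdn_add // hcardU dvdn_mulr.
    by rewrite /freeS hmM' -setDDl.
  have [hBA n1 n2] := hPA B hB.
  have hBU : [disjoint B & U].
    by rewrite disjoint_sym; apply: (disjointWl hUS); rewrite hPdis.
  rewrite hmM' setIUr (disjoint_setI0 hBU) setU0.
  have -> : freeS (R:=R) (M ++ [seq (g, t) | g <- gs]) B = freeS (R:=R) M B.
    rewrite /freeS hmM' -setDDl; apply/setDidPl.
    by apply: (disjointWl (subsetDl _ _)).
  exact: hblk.
- rewrite hmM' hcov subUset hmcov /=; exact: (subset_trans hUS).
- rewrite size_cat size_map mulnDr hmM' cardsU_disj ?hmsz ?hcardU //.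
  by rewrite disjoint_sym.
- by rewrite hcov.
- move=> u; rewrite hcov => hu; rewrite hmM' inE negb_or => /andP [hm _].
  exact: hfree.
- by rewrite hcov.
- exact: hdist'.
rewrite /alg_cost big_cat big_map /= size_cat natrD.
have hgc : forall g, g \in gs ->
    dH (fun i => pos (g i)) + \sum_(i < k) (t - atime (g i)) <= 2 * k%:R * K * Ysum y.
  move=> g hgg; have /andP [_ hgsub] := hgs g hgg.
  have gfree : forall i, g i \in freeS (R:=R) M S.
    by move=> i; apply: (subsetP hgsub); apply/imsetP; exists i.
  have gS : forall i, g i \in S by move=> i; have := gfree i; rewrite inE => /andP [].
  have gm : forall i, g i \notin matched (R:=R) M.
    by move=> i; have := gfree i; rewrite inE => /andP [].
  apply: (group_cost (S := S)) => // i.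
    have := hdist' (g i) (g i0); rewrite (pbS _ (gS i)); apply.
    - by rewrite hcov; apply: (subsetP Scov).
    - by rewrite hcov; apply: (subsetP Scov).
    by rewrite !pbS.
  by apply: hfree => //; apply: (subsetP Scov).
have hb := sum_seq_le hgc.
move: halg; rewrite /alg_cost => ha.
rewrite size_map -!mulrA mulrDl; rewrite -!mulrA in ha hb; exact: lerD.
Qed.


Lemma Inv_reach c : gd_reachable gamma dH atime pos r c ->
  Inv (gs_t c) (gs_A c) (gs_M c) (gs_y c).
Proof.
elim=> [|c0 c1 _ IH st]; first exact: Inv_init.
case: st IH => /=.
- by move=> t A M y v hv hat _ hI; apply: Inv_arrive.
- move=> t A M y D hD _ hgr hI; apply: Inv_advance => // u w hu hw hb.
  by case: (hgr u w hu hw hb).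
- move=> t A M y u w gs hu hw hb ht hgs hpw hfk hI.
  exact: Inv_merge.
Qed.

Lemma sum_in_T (T G : mset) : (\sum_(v in T) (v \in G) = #|T :&: G|)%N.
Proof.
rewrite -sum1_card (big_mkcond (fun v => v \in T :&: G)) (big_mkcond (fun v => v \in T)).
by apply: eq_bigr => v _; rewrite inE; case: (v \in T); case: (v \in G).
Qed.

Lemma cut_exists (P : {set {ffun 'I_k -> 'I_m}}) (T : mset) :
  perfect_kmatching P -> ~~ (k %| #|T|)%N ->
  exists2 F, F \in P & [exists i, F i \in T] && [exists j, F j \notin T].
Proof.
case=> hinj hdisj hcov hT.
case: (boolP [exists F in P, [exists i, F i \in T] && [exists j, F j \notin T]]).
  by case/existsP => F /andP [hF h]; exists F.
move=> hno; exfalso; move/negP: hT; apply.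
have e : #|T| = (\sum_(F in P) #|T :&: grp F|)%N.
  rewrite -sum1_card.
  rewrite (eq_bigr (fun v => \sum_(F in P) (v \in grp F) : nat)%N); last first.
    move=> v _; case: (hcov v) => F0 hF0 hv.
    rewrite (bigD1 F0) //= hv big1 // => G /andP [hG hne].
    by rewrite (disjointFr (hdisj F0 G hF0 hG _) hv) // eq_sym.
  rewrite exchange_big /=; apply: eq_bigr => F _; exact: sum_in_T.
rewrite e; apply: dvdn_sum => F hF.
have hnoF : ~~ ([exists i, F i \in T] && [exists j, F j \notin T]).
  by apply: contra hno => h; apply/existsP; exists F; rewrite hF.
case: (boolP [exists i, F i \in T]) => hex.
  have hall : grp F \subset T.
    apply/subsetP => x /imsetP [i _ ->]; apply: contraT => hn.
    by move: hnoF; rewrite hex /= => /existsPn /(_ i); rewrite hn.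
  rewrite (setIidPr hall) card_grp //; apply/injectiveP; exact: hinj.
suff -> : T :&: grp F = set0 by rewrite cards0 dvdn0.
apply/setP => x; rewrite !inE; apply/negP => /andP [hx /imsetP [i _ ei]].
by move/existsPn: hex => /(_ i); rewrite -ei hx.
Qed.


Lemma Ktight u w : K * tight u w = opt_cost_pair dH atime pos u w.
Proof.
rewrite /tight_bound /KK mulrCA mulfV ?mulr1 //.
by rewrite mulf_neq0 // pnatr_eq0 -lt0n ?expn_gt0 //; case: k hk.
Qed.

Lemma F_bound (F : {ffun 'I_k -> 'I_m}) :
  \sum_(l < k) opt_cost_pair dH atime pos (F i0) (F l)
    <= 2 * k%:R * gamma%:R * group_opt_cost dH atime pos F.
Proof.
rewrite /group_opt_cost /opt_cost_pair.
set Mx := \big[Num.max/0]_(j < k) atime (F j).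
set Tm := \sum_(i < k) (Mx - atime (F i)).
have hle : forall j, atime (F j) <= Mx by move=> j; exact: le_bigmax.
have hT0 : 0 <= Tm by rewrite /Tm sumr_ge0 // => i _; rewrite subr_ge0.
have hi0 : Mx - atime (F i0) <= Tm.
  by rewrite /Tm (bigD1 i0) //= lerDl sumr_ge0 // => i _; rewrite subr_ge0.
have hdH := dH_ge0 hH (fun i => pos (F i)).
apply: (le_trans (_ : _ <= \sum_(l < k) (2 * gamma%:R * dH (fun i => pos (F i))
     + ((Mx - atime (F i0)) + (Mx - atime (F l)))))).
  apply: ler_sum => l _; apply: lerD; first exact: (dmet_group hg hH (fun i => pos (F i)) i0 l).
  have := hle i0; have := hle l; rewrite ler_norml => h1 h2; apply/andP; split; lra.
have sc : forall c : R, \sum_(l < k) c = k%:R * c.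
  by move=> c; rewrite sumr_const card_ord mulr_natl.
rewrite big_split /= big_split /= !sc -/Tm.
have hk2 : 2 <= k%:R :> R by rewrite (ler_nat R 2 k).
have hg1 : 1 <= gamma%:R :> R by rewrite ler1n.
have f1 : (Mx - atime (F i0)) * k%:R <= Tm * k%:R :> R by rewrite ler_wpM2r // ltW // (lt_le_trans _ hk2).
have f0 : k%:R + 1 <= 2 * k%:R * gamma%:R :> R.
  have : 2 * k%:R * 1 <= 2 * k%:R * gamma%:R :> R by rewrite ler_wpM2l // mulr_ge0.
  lra.
have f2 : (k%:R + 1) * Tm <= (2 * k%:R * gamma%:R) * Tm by rewrite ler_wpM2r.
lra.
Qed.

Lemma Y_bound t A M y (P : {set {ffun 'I_k -> 'I_m}}) : Inv t A M y -> cover A = setT ->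
  perfect_kmatching P ->
  K * Ysum y <= 2 * k%:R * gamma%:R * matching_cost dH atime pos P.
Proof.
case=> _ _ hy0 _ hydiv _ _ _ _ _ hfeas _ _ hcovT hP.
have step1 : Ysum y <= \sum_(F in P) \sum_(l < k) load y (F i0) (F l).
  apply: (@le_trans _ _ (\sum_(T : mset) \sum_(F in P) \sum_(l < k)
      (if (F i0 \in T) != (F l \in T) then y T else 0))).
    rewrite /Ysum; apply: ler_sum => T _.
    case: (eqVneq (y T) 0) => [->|hne].
      by rewrite sumr_ge0 // => F _; rewrite sumr_ge0 // => l _; case: ifP.
    case: (cut_exists hP (hydiv T hne)) => F hF /andP [/existsP [i hi] /existsP [j hj]].
    pose l := if F i0 \in T then j else i.
    have hl : y T <= (if (F i0 \in T) != (F l \in T) then y T else 0).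
      by rewrite /l; case hc: (F i0 \in T) => /=; [rewrite (negbTE hj) | rewrite hi].
    apply: (le_trans hl); rewrite (bigD1 F) //= (bigD1 l) //= -addrA lerDl addr_ge0 //.
      by rewrite sumr_ge0 // => l' _; case: ifP.
    by rewrite sumr_ge0 // => G _; rewrite sumr_ge0 // => l' _; case: ifP.
  rewrite exchange_big /=; apply: ler_sum => F hF.
  by rewrite exchange_big /=; apply: ler_sum => l _; rewrite loadE.
apply: (le_trans (ler_wpM2l (ltW K_gt0) step1)).
rewrite /matching_cost mulr_sumr mulr_sumr; apply: ler_sum => F hF.
apply: le_trans (F_bound F); rewrite mulr_sumr; apply: ler_sum => l _.
rewrite -Ktight; apply: ler_wpM2l; first exact: ltW K_gt0.
by apply: hfeas; rewrite hcovT inE.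
Qed.

End Main.


Unset Implicit Arguments.



Theorem theorem2 (R : realType) (X : Type) (k m gamma : nat)
    (dH : ('I_k -> X) -> R) (atime : 'I_m -> R) (pos : 'I_m -> X) :
  (2 <= k)%N -> (1 <= gamma <= k - 1)%N ->
  H_metric gamma dH ->
  (k %| m)%N ->
  (forall v, 0 <= atime v) ->
  (forall u v : 'I_m, (val u <= val v)%N -> atime u <= atime v) ->
  forall c : gstate R m k,
    gd_reachable gamma dH atime pos (gamma%:R * (k ^ 2)%:R)^-1 c ->
    gd_complete c ->
    forall P : {set {ffun 'I_k -> 'I_m}}, perfect_kmatching P ->
      alg_cost dH atime pos (gs_M c)
        <= ((4 * m * k + k ^ 2) * gamma)%:R * matching_cost dH atime pos P.
Proof.
move=> hk hgk hH _ hat0 _ c hc hcomp P hP.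
have hg : (1 <= gamma)%N by case/andP: hgk.
have I := Inv_reach hk hg hH hc.
case: c hc hcomp I => t A M y /= _ hcomp I.
have hmT : matched (R:=R) M = setT by exact: hcomp.
have hcovT : cover A = setT.
  by apply/eqP; rewrite eqEsubset subsetT /= -hmT (i_mcov I).
have hsz : (k * size M)%N = m by rewrite (i_msz I) hmT cardsT card_ord.
have halg := i_alg I.
have hY := Y_bound hk hg hH I hcovT hP.
set O := matching_cost dH atime pos P in hY *.
have O0 : 0 <= O.
  rewrite /O /matching_cost sumr_ge0 // => F _; rewrite /group_opt_cost addr_ge0 //.
    exact: (dH_ge0 hH).
  by rewrite sumr_ge0 // => i _; rewrite subr_ge0 le_bigmax.
set Y := Ysum y in halg hY.
set K := KK R k gamma in halg hY.
have hs0 : 0 <= (size M)%:R :> R by [].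
have hk0 : 0 <= k%:R :> R by [].
have hg0 : 0 <= gamma%:R :> R by [].
have e1 : (size M)%:R * (2 * k%:R * K) * Y = ((size M)%:R * (2 * k%:R)) * (K * Y) by ring.
have h2 : ((size M)%:R * (2 * k%:R)) * (K * Y) <= ((size M)%:R * (2 * k%:R)) * (2 * k%:R * gamma%:R * O).
  by rewrite ler_wpM2l // mulr_ge0 // mulr_ge0.
have hms : k%:R * (size M)%:R = m%:R :> R by rewrite -natrM hsz.
have e2 : ((size M)%:R * (2 * k%:R)) * (2 * k%:R * gamma%:R * O)
          = 4 * (k%:R * (size M)%:R) * k%:R * gamma%:R * O :> R by ring.
rewrite hms in e2.
have e3 : ((4 * m * k + k ^ 2) * gamma)%:R = (4 * m%:R * k%:R + k%:R ^+ 2) * gamma%:R :> R.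
  by rewrite natrM natrD natrX !natrM.
rewrite e3.
have h4 : 0 <= k%:R ^+ 2 * gamma%:R * O :> R by rewrite mulr_ge0 // mulr_ge0 // sqr_ge0.
rewrite e1 in halg.
have : alg_cost dH atime pos M <= 4 * m%:R * k%:R * gamma%:R * O.
  by rewrite -e2; exact: le_trans h2.
move=> h5; apply: (le_trans h5).
rewrite mulrDl mulrDl; lra.
Qed.
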